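(* Let $k$ be a field of characteristic zero, $n-h\ge 1$, $h\ge 0$, $a\ge 0$, and let $D\subset\mathbb{P}^{n-h}\times\mathbb{P}^h$ be an integral divisor of bidegree $(1,a)$ defined over $k$. Then $D$ is unirational over $k$.
   Context: Unirational over $k$ means admitting a dominant rational map from a projective space over $k$ of the same dimension. *)

(* Defs.v *)
From HB Require Import structures.
From mathcomp Require Import all_boot all_order all_algebra.
From mathcomp Require Import mpoly.
Set Implicit Arguments. Unset Strict Implicit. Unset Printing Implicit Defensive.
Import GRing.Theory.
Local Open Scope ring_scope.

(* Ambient space P^m x P^h  (m = n - h) with bihomogeneous coordinates
   x_0..x_m (indices lshift) and y_0..y_h (indices rshift) in
   the polynomial ring k[x_0..x_m, y_0..y_h] = {mpoly k[m.+1 + h.+1]}. *)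

Definition xdeg (m h : nat) (mon : 'X_{1..(m.+1 + h.+1)}) : nat :=
  (\sum_(i < m.+1) mon (lshift h.+1 i))%N.
Definition ydeg (m h : nat) (mon : 'X_{1..(m.+1 + h.+1)}) : nat :=
  (\sum_(j < h.+1) mon (rshift m.+1 j))%N.

Definition bihomog (k : fieldType) (m h d e : nat)
    (G : {mpoly k[m.+1 + h.+1]}) : Prop :=
  forall mon, mon \in msupp G -> xdeg mon = d /\ ydeg mon = e.

(* Irreducibility in the polynomial ring over a field: non-constant and
   every factorization has a constant (= unit, as it is then nonzero) factor. *)
Definition mpoly_irreducible (k : fieldType) (N : nat) (F : {mpoly k[N]}) : Prop :=
  (1 < msize F)%N /\
  forall p q : {mpoly k[N]}, F = p * q -> (msize p <= 1)%N \/ (msize q <= 1)%N.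

Definition integral_divisor (k : fieldType) (m h a : nat)
    (F : {mpoly k[m.+1 + h.+1]}) : Prop :=
  bihomog 1 a F /\ mpoly_irreducible F.

(* A rational map P^(n-1) --> P^m x P^h defined over k (source coordinates
   t_0..t_(n-1), i.e. {mpoly k[n]}), given by a tuple of homogeneous forms of a
   common degree dx for the x-part (not all zero) and of a common degree dy
   for the y-part (not all zero). *)
Definition rat_map_to_biproj (k : fieldType) (n m h : nat)
    (phix : m.+1.-tuple {mpoly k[n]}) (phiy : h.+1.-tuple {mpoly k[n]}) : Prop :=
  exists dx dy : nat,
    (forall i, tnth phix i \is dx.-homog) /\ (exists i, tnth phix i != 0) /\
    (forall j, tnth phiy j \is dy.-homog) /\ (exists j, tnth phiy j != 0).

Definition pullback (k : fieldType) (n m h : nat)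
    (phix : m.+1.-tuple {mpoly k[n]}) (phiy : h.+1.-tuple {mpoly k[n]})
    (G : {mpoly k[m.+1 + h.+1]}) : {mpoly k[n]} :=
  comp_mpoly (cat_tuple phix phiy) G.

(* The rational map is dominant onto D = V(F) (F irreducible): the
   bihomogeneous forms vanishing on its image are exactly those vanishing on D,
   i.e. the multiples of F. *)
Definition dominant_onto (k : fieldType) (n m h : nat)
    (phix : m.+1.-tuple {mpoly k[n]}) (phiy : h.+1.-tuple {mpoly k[n]})
    (F : {mpoly k[m.+1 + h.+1]}) : Prop :=
  pullback phix phiy F = 0 /\
  forall (d e : nat) (G : {mpoly k[m.+1 + h.+1]}),
    bihomog d e G -> pullback phix phiy G = 0 ->
    exists Q : {mpoly k[m.+1 + h.+1]}, G = F * Q.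

(* D = V(F) subset P^m x P^h (of dimension m + h - 1) is unirational over k:
   there is a dominant rational map P^(m+h-1) --> D defined over k. *)
Definition unirational_divisor (k : fieldType) (m h : nat)
    (F : {mpoly k[m.+1 + h.+1]}) : Prop :=
  exists (phix : m.+1.-tuple {mpoly k[m + h]}) (phiy : h.+1.-tuple {mpoly k[m + h]}),
    rat_map_to_biproj phix phiy /\ dominant_onto phix phiy F.

(* Main.v *)
Require Import Defs.
From HB Require Import structures.
From mathcomp Require Import all_boot all_order all_algebra.
From mathcomp Require Import mpoly.
From Stdlib Require Import Classical.
From mathcomp Require Import zify ring.
Set Implicit Arguments. Unset Strict Implicit. Unset Printing Implicit Defensive.
Import GRing.Theory.
Local Open Scope ring_scope.


Section UFD.
Variable A : idomainType.

Definition dvd (a b : A) := exists c, b = a * c.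
Definition irred (p : A) := p != 0 /\ p \isn't a GRing.unit /\
  forall a b, p = a * b -> a \is a GRing.unit \/ b \is a GRing.unit.
Definition primeel (p : A) := p != 0 /\ p \isn't a GRing.unit /\
  forall a b, dvd p (a * b) -> dvd p a \/ dvd p b.
Definition measured (mu : A -> nat) :=
  (forall a b, a != 0 -> b != 0 -> mu (a * b) = (mu a + mu b)%N) /\
  (forall a, a != 0 -> (mu a == 0%N) = (a \is a GRing.unit)).
Definition UFDl := (forall p, irred p -> primeel p) /\ exists mu, measured mu.

Lemma dvd_refl a : dvd a a. Proof. by exists 1; rewrite mulr1. Qed.
Lemma dvd_mulr a b c : dvd a b -> dvd a (b * c).
Proof. by case=> d ->; exists (d * c); rewrite mulrA. Qed.
Lemma dvd_mull a b c : dvd a b -> dvd a (c * b).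
Proof. by rewrite mulrC; apply: dvd_mulr. Qed.
Lemma dvd_trans a b c : dvd a b -> dvd b c -> dvd a c.
Proof. by case=> d -> [e ->]; exists (d * e); rewrite mulrA. Qed.

Lemma measured_factor mu : measured mu -> forall a, a != 0 -> a \isn't a GRing.unit ->
  exists p c, irred p /\ a = p * c /\ c != 0 /\ (mu c < mu a)%N.
Proof.
move=> [muM muU].
suff H : forall n a, (mu a <= n)%N -> a != 0 -> a \isn't a GRing.unit ->
  exists p c, irred p /\ a = p * c /\ c != 0 /\ (mu c < mu a)%N by move=> a; exact: H.
elim=> [|n IH] a.
  by rewrite leqn0 => /eqP m0 a0; rewrite -muU // m0.
move=> le a0 na.
case: (classic (irred a)) => [ia|nia].
  exists a, 1; split; first exact: ia.
  have m1 : mu 1 = 0%N by apply/eqP; rewrite muU ?unitr1 ?oner_neq0.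
  by rewrite mulr1 oner_neq0 m1 lt0n muU.
have [b [c [abc [nb nc]]]] : exists b c, a = b * c /\ b \isn't a GRing.unit /\ c \isn't a GRing.unit.
  apply: NNPP => H; apply: nia; split=> //; split=> // b c abc.
  case: (boolP (b \is a GRing.unit)) => ub; first by left.
  case: (boolP (c \is a GRing.unit)) => uc; first by right.
  by exfalso; apply: H; exists b, c.
have b0 : b != 0 by apply: contraNneq a0; rewrite abc => ->; rewrite mul0r.
have c0 : c != 0 by apply: contraNneq a0; rewrite abc => ->; rewrite mulr0.
have mc : (0 < mu c)%N by rewrite lt0n muU.
have mb : (0 < mu b)%N by rewrite lt0n muU.
have : (mu b <= n)%N.
  by move: le; rewrite abc muM // => h; rewrite -ltnS; apply: leq_trans h; rewrite -addn1 leq_add2l.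
move=> /IH /(_ b0 nb) [p [d [ip [bpd [d0 ld]]]]].
exists p, (d * c); split=> //; split; first by rewrite abc bpd mulrA.
split; first by rewrite mulf_neq0.
by rewrite abc muM // muM // ltn_add2r.
Qed.

End UFD.


Section PolyUFD.
Variable A : idomainType.
Implicit Types (f g h : {poly A}) (p c : A).

Definition cdvd p f := forall i, dvd p f`_i.

Lemma cdvdP p f : p != 0 -> dvd (p%:P) f <-> cdvd p f.
Proof.
move=> p0; split.
  by case=> g -> i; rewrite coefCM; exists g`_i.
move=> H.
have H' : forall i, exists c, f`_i == p * c by move=> i; case: (H i) => c ->; exists c.
exists (\poly_(i < size f) xchoose (H' i)).
apply/polyP=> i; rewrite coefCM coef_poly.
case: ltnP => hi; first by rewrite -(eqP (xchooseP (H' i))).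
by rewrite mulr0 nth_default.
Qed.

Lemma primeC p : primeel p -> primeel (p%:P : {poly A}).
Proof.
move=> [p0 [pu pP]].
split; first by rewrite polyC_eq0.
split; first by rewrite poly_unitE size_polyC p0 /= coefC.
suff H : forall n f g, (size f + size g <= n)%N -> cdvd p (f * g) -> cdvd p f \/ cdvd p g.
  by move=> f g; rewrite !cdvdP //; apply: H (leqnn _).
elim=> [|n IH] f g.
  rewrite leqn0 addn_eq0 !size_poly_eq0 => /andP[/eqP-> _] _; left=> i; rewrite coef0.
  by exists 0; rewrite mulr0.
wlog: f g / dvd p f`_0.
  move=> W le H.
  have := H 0%N; rewrite coef0M => /pP [] h; first exact: W.
  by rewrite or_comm; apply: W => //; rewrite 1?addnC // mulrC.
move=> hf0 le H.
have fE : f = (f`_0)%:P + 'X * drop_poly 1 f.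
  by rewrite -{1}(poly_take_drop 1 f) mulrC expr1; congr (_ + _); apply/polyP=> i; rewrite coef_take_poly coefC; case: i.
have H2 : cdvd p (drop_poly 1 f * g).
  move=> i; have := H i.+1.
  rewrite {1}fE mulrDl coefD coefCM -mulrA coefXM /=.
  case: hf0 => c ->; case=> d hd; exists (d - c * g`_i.+1).
  by rewrite mulrBr mulrA -hd addrAC subrr add0r.
case: (eqVneq (drop_poly 1 f) 0) => hd.
  left=> i; rewrite fE hd mulr0 addr0 coefC; case: i => [|i] //=.
  by exists 0; rewrite mulr0.
have hs : (size (drop_poly 1 f) + size g <= n)%N.
  rewrite size_drop_poly; move: le hd.
  rewrite -size_poly_eq0 size_drop_poly; case: (size f) => //= s.
  by rewrite subn1 /= addSn ltnS.
case: (IH _ _ hs H2) => h; last by right.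
left=> i; rewrite fE coefD coefC coefXM; case: i => [|i] /=.
  by rewrite addr0.
by rewrite add0r; apply: h.
Qed.

Definition pmu (mu : A -> nat) (f : {poly A}) := ((size f).-1 + mu (lead_coef f))%N.

Lemma pmu_measured mu : measured mu -> measured (pmu mu).
Proof.
move=> [muM muU]; split.
  move=> f g f0 g0; rewrite /pmu size_mul // lead_coefM muM ?lead_coef_eq0 //.
  move: f0 g0; rewrite -!size_poly_eq0.
  by case: (size f) => // a; case: (size g) => // b _ _ /=; rewrite addnS /=; lia.
move=> f f0; rewrite /pmu poly_unitE addn_eq0.
have lc0 : lead_coef f != 0 by rewrite lead_coef_eq0.
move: lc0 f0; rewrite -size_poly_eq0 /lead_coef.
case: (size f) => // [[|s]] //= h _.
by rewrite muU.
Qed.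

End PolyUFD.


Section PolyUFD2.
Variable A : idomainType.
Variable mu : A -> nat.
Hypothesis muM : measured mu.
Hypothesis irrP : forall p : A, irred p -> primeel p.
Implicit Types (f g h q r : {poly A}) (p c : A).

Lemma dvd_add (R : idomainType) (a b c : R) : dvd a b -> dvd a c -> dvd a (b + c).
Proof. by case=> x -> [y ->]; exists (x + y); rewrite mulrDr. Qed.
Lemma dvd_opp (R : idomainType) (a b : R) : dvd a b -> dvd a (- b).
Proof. by case=> x ->; exists (- x); rewrite mulrN. Qed.

Lemma const_ind (P : A -> Prop) :
  (forall c, c \is a GRing.unit -> P c) ->
  (forall p c, primeel p -> c != 0 -> P c -> P (p * c)) ->
  forall c, c != 0 -> P c.
Proof.
move=> Hu Hp.
suff H : forall n c, (mu c <= n)%N -> c != 0 -> P c by move=> c; exact: H.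
elim=> [|n IH] c.
  rewrite leqn0 => /eqP m0 c0; apply: Hu; by rewrite -muM.2 // m0.
move=> le c0.
case: (boolP (c \is a GRing.unit)) => cu; first exact: Hu.
have [p [d [ip [Ec [d0 ld]]]]] := measured_factor muM c0 cu; rewrite Ec.
apply: Hp => //; first exact: irrP.
by apply: IH => //; rewrite -ltnS; apply: leq_trans ld le.
Qed.

Lemma unit_size1 f : f \is a GRing.unit -> size f = 1%N.
Proof. by rewrite poly_unitE => /andP[/eqP]. Qed.

Lemma irred_polyE f : irred f -> (1 < size f)%N ->
  forall c, c != 0 -> forall q r, c%:P * f = q * r -> (size q <= 1)%N \/ (size r <= 1)%N.
Proof.
move=> [f0 [fu fP]] sf.
apply: (@const_ind (fun c => forall q r, c%:P * f = q * r -> (size q <= 1)%N \/ (size r <= 1)%N)).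
  move=> c cu q r E.
  have E' : f = ((c^-1)%:P * q) * r by rewrite -mulrA -E mulrA -polyCM mulVr // mul1r.
  have ci0 : c^-1 != 0 by rewrite invr_eq0; apply: contraTneq cu => ->; rewrite unitr0.
  case: (fP _ _ E') => /unit_size1; first by rewrite size_Cmul // => ->; left.
  by move=> ->; right.
move=> p c [p0 [pu pP]] c0 IH q r E.
have : dvd (p%:P) (q * r) by exists (c%:P * f); rewrite -E polyCM mulrA.
move/((primeC (conj p0 (conj pu pP))).2.2) => [[q' Eq]|[r' Er]].
  have : c%:P * f = q' * r.
    have pn0 : p%:P != 0 by rewrite polyC_eq0.
    by apply: (mulfI pn0); rewrite /= !mulrA -polyCM E Eq.
  by move/IH; rewrite Eq size_Cmul.
have : c%:P * f = q * r'.
  have pn0 : p%:P != 0 by rewrite polyC_eq0.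
  by apply: (mulfI pn0); rewrite /= !mulrA -polyCM E Er mulrCA mulrA.
by move/IH; rewrite Er size_Cmul.
Qed.

Lemma irred_polyD f : irred f -> (1 < size f)%N ->
  forall c, c != 0 -> forall g, dvd f (c%:P * g) -> dvd f g.
Proof.
move=> [f0 [fu fP]] sf.
apply: (@const_ind (fun c => forall g, dvd f (c%:P * g) -> dvd f g)).
  move=> c cu g [q E]; exists ((c^-1)%:P * q).
  by rewrite mulrCA -E mulrA -polyCM mulVr // mul1r.
move=> p c [p0 [pu pP]] c0 IH g [q E].
have : dvd (p%:P) (f * q) by exists (c%:P * g); rewrite -E polyCM mulrA.
move/((primeC (conj p0 (conj pu pP))).2.2) => [[f' Ef]|[q' Eq]].
  exfalso; case: (fP _ _ Ef) => [|/unit_size1].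
    by rewrite poly_unitE coefC /= (negbTE pu) andbF.
  by move=> sf'; move: sf; rewrite Ef size_Cmul // sf'.
apply: IH; exists q'.
have pn0 : p%:P != 0 by rewrite polyC_eq0.
by apply: (mulfI pn0); rewrite /= !mulrA -polyCM E Eq mulrCA mulrA.
Qed.

Lemma irred_poly_prime f : irred f -> primeel f.
Proof.
move=> fi; have [f0 [fu fP]] := fi.
split=> //; split=> //.
have : (0 < size f)%N by rewrite size_poly_gt0.
rewrite leq_eqVlt => /orP[/eqP sf1|sf].
  have [c c0 fc] : exists2 c, c != 0 & f = c%:P by apply/size_poly1P; rewrite -sf1.
  have ic : irred c.
    split=> //; split.
      by move: fu; rewrite fc poly_unitE size_polyC c0 coefC.
    move=> a b E; have := fP a%:P b%:P; rewrite fc E polyCM => /(_ erefl).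
    by rewrite !poly_unitE !coefC /= => [[/andP[_ ->]|/andP[_ ->]]]; [left|right].
  by rewrite fc; exact: (primeC (irrP ic)).2.2.
move=> g h Hgh.
case: (classic (dvd f h)) => Hh; first by right.
left.
have fJ : dvd f (f * h) by exists h.
have K : forall n r, (size r <= n)%N -> r != 0 -> (size r < size f)%N -> dvd f (r * h) -> False.
  elim=> [|n IH] r; first by rewrite leqn0 size_poly_eq0 => /eqP->; rewrite eqxx.
  move=> sr r0 lt Jr.
  have E := Pdiv.Idomain.divp_eq f r.
  set k := Pdiv.Idomain.scalp f r in E; set q := Pdiv.Idomain.divp f r in E.
  set s := Pdiv.Idomain.modp f r in E.
  have ck : lead_coef r ^+ k != 0 by apply: Pdiv.Idomain.lc_expn_scalp_neq0.
  have Js : dvd f (s * h).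
    have -> : s = (lead_coef r ^+ k)%:P * f - q * r by rewrite mul_polyC E addrAC subrr add0r.
    rewrite mulrBl; apply: dvd_add; first by rewrite -mulrA; apply: dvd_mull; exact: fJ.
    by apply: dvd_opp; rewrite -mulrA; apply: dvd_mull.
  have ss : (size s < size r)%N by apply: Pdiv.Idomain.ltn_modpN0.
  case: (eqVneq s 0) => s0; last first.
    by apply: (IH s) => //; [rewrite -ltnS; apply: leq_trans sr|apply: ltn_trans lt].
  move: E; rewrite s0 addr0 -mul_polyC => E.
  case: (irred_polyE fi sf ck E) => sz.
    have ckP : (lead_coef r ^+ k)%:P != 0 by rewrite polyC_eq0.
    have q0 : q != 0.
      by apply/eqP => qz; move: (mulf_neq0 ckP f0); rewrite E qz mul0r eqxx.
    move: (congr1 (fun t : {poly A} => size t) E) => /=; rewrite size_Cmul // size_mul //.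
    move: sz lt q0; rewrite -size_poly_eq0; case: (size q) => [|[|]] // _ + _; lia.
  have [c c0 rc] : exists2 c, c != 0 & r = c%:P.
    by apply/size_poly1P; move: sz r0; rewrite -size_poly_eq0; case: (size r) => [|[|]].
  by apply: Hh; apply: (irred_polyD fi sf c0); rewrite -rc.
have E := Pdiv.Idomain.divp_eq g f.
set k := Pdiv.Idomain.scalp g f in E; set q := Pdiv.Idomain.divp g f in E.
set s := Pdiv.Idomain.modp g f in E.
have ck : lead_coef f ^+ k != 0 by apply: Pdiv.Idomain.lc_expn_scalp_neq0.
have Js : dvd f (s * h).
  have -> : s = (lead_coef f ^+ k)%:P * g - q * f by rewrite mul_polyC E addrAC subrr add0r.
  rewrite mulrBl; apply: dvd_add; first by rewrite -mulrA; apply: dvd_mull.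
  by apply: dvd_opp; rewrite -mulrA; apply: dvd_mull.
have ss : (size s < size f)%N by apply: Pdiv.Idomain.ltn_modpN0.
case: (eqVneq s 0) => s0; last by exfalso; exact: (K _ s (leqnn _) s0 ss Js).
apply: (irred_polyD fi sf ck); rewrite mul_polyC E s0 addr0.
by exists q; rewrite mulrC.
Qed.

End PolyUFD2.

Lemma UFDl_poly (A : idomainType) : UFDl A -> UFDl {poly A}.
Proof.
move=> [irrP [mu muM]]; split; last by exists (pmu mu); exact: pmu_measured.
by move=> f; apply: (irred_poly_prime muM irrP).
Qed.


Local Notation widen := (widen_ord (leqnSn _)).
Local Notation "'U_(' n )" := (mnm1 n) : multi_scope.

Section MorphEq.
Variable k : fieldType.

Lemma mpoly_fun_eq n (S : ringType) (f g : {mpoly k[n]} -> S) :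
  {morph f : x y / x + y} -> f 0 = 0 -> {morph f : x y / x * y} -> f 1 = 1 ->
  {morph g : x y / x + y} -> g 0 = 0 -> {morph g : x y / x * y} -> g 1 = 1 ->
  (forall c, f c%:MP = g c%:MP) -> (forall i, f 'X_i = g 'X_i) -> forall p, f p = g p.
Proof.
move=> fD f0 fM f1 gD g0 gM g1 HC HX p.
have fX : forall m, f 'X_[m] = g 'X_[m].
  move=> m; rewrite mpolyXE_id.
  rewrite (big_morph f fM f1) (big_morph g gM g1); apply: eq_bigr => i _.
  elim: (m i) => [|j IH]; first by rewrite !expr0 f1 g1.
  by rewrite !exprS fM gM IH HX.
rewrite (mpolyE p) (big_morph f fD f0) (big_morph g gD g0); apply: eq_bigr => m _.
by rewrite -mul_mpolyC fM gM HC fX.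
Qed.

Lemma poly_fun_eq (R : nzRingType) (S : ringType) (f g : {poly R} -> S) :
  {morph f : x y / x + y} -> f 0 = 0 -> {morph f : x y / x * y} -> f 1 = 1 ->
  {morph g : x y / x + y} -> g 0 = 0 -> {morph g : x y / x * y} -> g 1 = 1 ->
  (forall c, f c%:P = g c%:P) -> f 'X = g 'X -> forall p, f p = g p.
Proof.
move=> fD f0 fM f1 gD g0 gM g1 HC HX p.
rewrite -(coefK p) poly_def (big_morph f fD f0) (big_morph g gD g0); apply: eq_bigr => i _.
rewrite -mul_polyC fM gM HC; congr (_ * _).
case: i => i _ /=; elim: i => [|j IH]; first by rewrite !expr0 f1 g1.
by rewrite !exprS fM gM IH HX.
Qed.

Variable n : nat.

Definition minv (q : {poly {mpoly k[n]}}) : {mpoly k[n.+1]} :=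
  (map_poly (@mwiden n k) q).['X_ord_max].

Lemma minvD : {morph minv : x y / x + y}.
Proof. by move=> x y; rewrite /minv rmorphD hornerD. Qed.
Lemma minv0 : minv 0 = 0.
Proof. by rewrite /minv rmorph0 horner0. Qed.
Lemma minvM : {morph minv : x y / x * y}.
Proof. by move=> x y; rewrite /minv rmorphM hornerM. Qed.
Lemma minv1 : minv 1 = 1.
Proof. by rewrite /minv rmorph1 hornerC. Qed.
Lemma minvC c : minv c%:P = mwiden c.
Proof. by rewrite /minv map_polyC hornerC. Qed.
Lemma minvX : minv 'X = 'X_ord_max.
Proof. by rewrite /minv map_polyX hornerX. Qed.

Lemma muniXw (j : 'I_n) : muni ('X_(widen j) : {mpoly k[n.+1]}) = ('X_j)%:P.
Proof.
rewrite muniE msuppX big_seq1 mcoeffX eqxx scale1r.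
have -> : (U_(widen j)%MM : 'X_{1..n.+1}) ord_max = 0%N.
  by rewrite mnmE; case: eqP => // /(congr1 val) /= /eqP; rewrite ltn_eqF.
rewrite expr0 -mul_polyC mulr1; congr (_%:P); congr ('X_[_]).
by apply/mnmP => i; rewrite !mnmE; congr (nat_of_bool _); apply/eqP/eqP => [/widen_ord_inj|->].
Qed.

Lemma muniXm : muni ('X_ord_max : {mpoly k[n.+1]}) = 'X.
Proof.
rewrite muniE msuppX big_seq1 mcoeffX eqxx scale1r.
have -> : (U_(@ord_max n)%MM : 'X_{1..n.+1}) ord_max = 1%N by rewrite mnmE eqxx.
have -> : [multinom (U_(@ord_max n)%MM : 'X_{1..n.+1}) (widen i) | i < n] = 0%MM.
  apply/mnmP => i; rewrite !mnmE; case: eqP => // /(congr1 val) /= /eqP.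
  by rewrite eq_sym ltn_eqF.
by rewrite mpolyX0 scale1r expr1.
Qed.

Lemma muni_minv q : muni (minv q) = q.
Proof.
apply: (@poly_fun_eq _ _ (fun q => muni (minv q)) id) => //.
- by move=> x y; rewrite minvD muniD.
- by rewrite minv0 muni0.
- by move=> x y; rewrite minvM muniM.
- by rewrite minv1 muni1.
- move=> c; rewrite minvC.
  apply: (@mpoly_fun_eq _ _ (fun c => muni (mwiden c)) (fun c => c%:P)) => //.
  + by move=> x y; rewrite mwidenD muniD.
  + by rewrite mwiden0 muni0.
  + by move=> x y; rewrite mwidenM muniM.
  + by rewrite mwiden1 muni1.
  + exact: polyCD.
  + exact: polyCM.
  + by move=> d; rewrite mwidenC muniC.
  + move=> i; rewrite mwidenX mnmwiden1; exact: muniXw.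
- by rewrite minvX muniXm.
Qed.

Lemma minv_muni p : minv (muni p) = p.
Proof.
apply: (@mpoly_fun_eq _ _ (fun q => minv (muni q)) id) => //.
- by move=> x y; rewrite muniD minvD.
- by rewrite muni0 minv0.
- by move=> x y; rewrite muniM minvM.
- by rewrite muni1 minv1.
- by move=> c; rewrite muniC minvC mwidenC.
move=> i; case: (unliftP ord_max i) => [j ->|->]; last by rewrite muniXm minvX.
have -> : lift ord_max j = widen j by apply: val_inj; rewrite /= /bump leqNgt ltn_ord.
by rewrite muniXw minvC mwidenX mnmwiden1.
Qed.

End MorphEq.


Lemma UFDl_transfer (A B : idomainType) (f : A -> B) (g : B -> A) :
  {morph f : x y / x * y} -> f 1 = 1 -> f 0 = 0 -> cancel f g -> cancel g f ->
  UFDl B -> UFDl A.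
Proof.
move=> fM f1 f0 fK gK [irrB [mu [muM muU]]].
have gM : {morph g : x y / x * y}.
  by move=> x y; rewrite -{1}(gK x) -{1}(gK y) -fM fK.
have g1 : g 1 = 1 by rewrite -f1 fK.
have fI : injective f := can_inj fK.
have fU : forall a, (f a \is a GRing.unit) = (a \is a GRing.unit).
  move=> a; apply/unitrPr/unitrPr => [[y hy]|[y hy]].
    by exists (g y); rewrite -{1}(fK a) -gM hy g1.
  by exists (f y); rewrite -fM hy f1.
have fn0 : forall a, (f a != 0) = (a != 0).
  by move=> a; congr (~~ _); apply/eqP/eqP => [h|->//]; apply: fI; rewrite h f0.
split; last first.
  exists (fun a => mu (f a)); split.
    by move=> a b a0 b0; rewrite fM muM ?fn0.
  by move=> a a0; rewrite muU ?fn0 // fU.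
move=> a [a0 [au aP]].
have ifa : irred (f a).
  split; first by rewrite fn0.
  split; first by rewrite fU.
  move=> x y E; have : a = g x * g y by rewrite -gM -E fK.
  by move/aP; rewrite -(fU (g x)) -(fU (g y)) !gK.
have [_ [_ P]] := irrB _ ifa.
split=> //; split=> // b c [d E].
have : dvd (f a) (f b * f c) by exists (f d); rewrite -!fM E.
by move/P => [[e Ee]|[e Ee]]; [left|right]; exists (g e); apply: fI; rewrite fM gK.
Qed.

Lemma UFDl_mpoly0 (k : fieldType) : UFDl {mpoly k[0]}.
Proof.
have U : forall p : {mpoly k[0]}, p != 0 -> p \is a GRing.unit.
  move=> p p0.
  have E : p = (p@_0)%:MP.
    apply: msize1_polyC; rewrite msizeE; apply/bigmax_leqP_seq => m _.
    by move=> _; rewrite ltnS leqn0 mdeg_eq0; apply/eqP/mnmP => -[].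
  have c0 : p@_0 != 0 by apply: contraNneq p0 => h; rewrite E h.
  apply/unitrPr; exists ((p@_0)^-1)%:MP; rewrite {1}E -mpolyCM divff //.
split.
  by move=> p [p0 [pu _]]; exfalso; move: pu; rewrite U.
exists (fun _ => 0%N); split=> // a a0; by rewrite U.
Qed.

Lemma UFDl_mpoly (k : fieldType) n : UFDl {mpoly k[n]}.
Proof.
elim: n => [|n IH]; first exact: UFDl_mpoly0.
apply: (@UFDl_transfer _ _ (@muni n k) (@minv k n)).
- exact: muniM.
- exact: muni1.
- exact: muni0.
- exact: minv_muni.
- exact: muni_minv.
- exact: UFDl_poly.
Qed.


Section Geo.
Variable k : fieldType.
Variables m h : nat.
Local Notation N := (m.+1 + h.+1)%N.

Lemma prod_cat (S : comRingType) (u : m.+1.-tuple S) (v : h.+1.-tuple S) (mon : 'X_{1..N}) :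
  \prod_(i < N) tnth (cat_tuple u v) i ^+ mon i =
  (\prod_(i < m.+1) tnth u i ^+ mon (lshift h.+1 i)) *
  (\prod_(j < h.+1) tnth v j ^+ mon (rshift m.+1 j)).
Proof.
rewrite big_split_ord /=; congr (_ * _); apply: eq_bigr => i _.
  by rewrite tnth_lshift.
by rewrite tnth_rshift.
Qed.

Definition sct (M : nat) (l : {mpoly k[M]}) n (u : n.-tuple {mpoly k[M]}) :=
  [tuple l * tnth u i | i < n].

Lemma comp_scale (M d e : nat) (G : {mpoly k[N]}) (l mu : {mpoly k[M]})
    (u : m.+1.-tuple {mpoly k[M]}) (v : h.+1.-tuple {mpoly k[M]}) :
  bihomog d e G ->
  G \mPo cat_tuple (sct l u) (sct mu v) = l ^+ d * mu ^+ e * (G \mPo cat_tuple u v).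
Proof.
move=> HG; rewrite !comp_mpolyE mulr_sumr; apply: eq_big_seq => mon Hmon.
have [xd yd] := HG mon Hmon.
rewrite -scalerAr; congr (_ *: _); rewrite !prod_cat.
under eq_bigr do rewrite tnth_map tnth_ord_tuple exprMn.
under [X in _ * X]eq_bigr do rewrite tnth_map tnth_ord_tuple exprMn.
rewrite !big_split /= !prodrXr.
move: xd yd; rewrite /xdeg /ydeg => -> ->.
by rewrite mulrACA -!mulrA.
Qed.

Definition ei (M : nat) (i : 'I_m.+1) : m.+1.-tuple {mpoly k[M]} :=
  [tuple ((i == j)%:R : {mpoly k[M]}) | j < m.+1].

Lemma sum1_delta n (al : 'I_n -> nat) : (\sum_i al i = 1)%N ->
  exists i0, forall i, al i = (i == i0) :> nat.
Proof.
move=> H.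
have [i0 hi0] : exists i0, al i0 != 0%N.
  apply: NNPP => C; move: H; rewrite big1 // => i _; apply/eqP.
  by apply: contraT => hi; case: C; exists i.
exists i0 => i.
move: H; rewrite (bigD1 i0) //=.
case: (eqVneq i i0) => [->|ne].
  by move: hi0; case: (al i0) => // [[|]] //= n0; lia.
rewrite (bigD1 i) //= => H.
by move: hi0 H; case: (al i0) => // s _; lia.
Qed.

Lemma prod_delta (S : comRingType) n (w : 'I_n -> S) (al : 'I_n -> nat) i0 :
  (forall i, al i = (i == i0) :> nat) -> \prod_i w i ^+ al i = w i0.
Proof.
move=> H; rewrite (bigD1 i0) //= H eqxx expr1 big1 ?mulr1 // => i hi.
by rewrite H (negbTE hi) expr0.
Qed.

Lemma comp_lin (M a : nat) (F : {mpoly k[N]})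
    (u : m.+1.-tuple {mpoly k[M]}) (v : h.+1.-tuple {mpoly k[M]}) :
  bihomog 1 a F ->
  F \mPo cat_tuple u v = \sum_(i < m.+1) tnth u i * (F \mPo cat_tuple (ei M i) v).
Proof.
move=> HF.
under [RHS]eq_bigr do rewrite comp_mpolyE mulr_sumr.
rewrite exchange_big comp_mpolyE /=; apply: eq_big_seq => mon Hmon.
have [xd _] := HF mon Hmon.
have [i0 Hi0] := sum1_delta xd.
rewrite prod_cat (@prod_delta _ _ _ _ _ Hi0).
rewrite [RHS](bigD1 i0) //= [X in _ + X]big1 ?addr0; last first.
  move=> i hi; rewrite prod_cat (@prod_delta _ _ _ _ _ Hi0) tnth_map tnth_ord_tuple.
  by rewrite (negbTE hi) mul0r scaler0 mulr0.
rewrite prod_cat (@prod_delta _ _ _ _ _ Hi0) tnth_map tnth_ord_tuple eqxx mul1r.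
by rewrite scalerAr.
Qed.

End Geo.

Section Comp.
Variable k : fieldType.

Lemma comp_assoc (n1 n2 n3 : nat) (G : {mpoly k[n1]}) (L : n1.-tuple {mpoly k[n2]})
    (L2 : n2.-tuple {mpoly k[n3]}) :
  (G \mPo L) \mPo L2 = G \mPo [tuple tnth L i \mPo L2 | i < n1].
Proof.
rewrite (comp_mpolyE G L) (comp_mpolyE G) (raddf_sum (comp_mpoly L2)); apply: eq_bigr => mon _.
rewrite /= comp_mpolyZ rmorph_prod; congr (_ *: _); apply: eq_bigr => i _.
by rewrite rmorphXn tnth_map tnth_ord_tuple.
Qed.

Definition cong (n : nat) (F a b : {mpoly k[n]}) := exists q, a - b = F * q.

Lemma cong_refl n F (a : {mpoly k[n]}) : cong F a a.
Proof. by exists 0; rewrite subrr mulr0. Qed.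
Lemma cong_add n F (a b c d : {mpoly k[n]}) : cong F a b -> cong F c d -> cong F (a + c) (b + d).
Proof. by case=> x hx [y hy]; exists (x + y); rewrite mulrDr -hx -hy; ring. Qed.
Lemma cong_mul n F (a b c d : {mpoly k[n]}) : cong F a b -> cong F c d -> cong F (a * c) (b * d).
Proof.
case=> x hx [y hy]; exists (x * c + b * y).
by rewrite mulrDr mulrA -hx mulrCA -hy; ring.
Qed.
Lemma cong_scale n F (a b : {mpoly k[n]}) c : cong F a b -> cong F (c *: a) (c *: b).
Proof. by case=> x hx; exists (c *: x); rewrite -scalerBr hx scalerAr. Qed.
Lemma cong_exp n F (a b : {mpoly k[n]}) e : cong F a b -> cong F (a ^+ e) (b ^+ e).
Proof.
move=> H; elim: e => [|e IH]; first by rewrite !expr0; exact: cong_refl.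
by rewrite !exprS; apply: cong_mul.
Qed.

Lemma comp_cong (n1 n2 : nat) (F : {mpoly k[n2]}) (G : {mpoly k[n1]}) (L L' : n1.-tuple {mpoly k[n2]}) :
  (forall i, cong F (tnth L i) (tnth L' i)) -> cong F (G \mPo L) (G \mPo L').
Proof.
move=> H; rewrite !comp_mpolyE.
elim/big_rec2: _ => [|mon x y _ hxy]; first exact: cong_refl.
apply: cong_add => //; apply: cong_scale.
elim/big_rec2: _ => [|i x' y' _ hxy']; first exact: cong_refl.
by apply: cong_mul => //; apply: cong_exp.
Qed.

Lemma comp_homog (n1 n2 : nat) (G : {mpoly k[n1]}) (L : n1.-tuple {mpoly k[n2]})
    (w : 'I_n1 -> nat) (D : nat) :
  (forall i, tnth L i \is (w i).-homog) ->
  (forall mon, mon \in msupp G -> (\sum_i w i * mon i)%N = D) ->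
  G \mPo L \is D.-homog.
Proof.
move=> HL HG; rewrite comp_mpolyE big_seq.
apply: rpred_sum => mon Hmon; apply: dhomogZ.
rewrite -(HG mon Hmon).
elim/big_rec2: _ => [|i d p _ hp]; first exact: dhomog1.
by apply: dhomogM => //; apply: dhomogMn.
Qed.

End Comp.


Lemma compX (k : fieldType) n1 n2 (i : 'I_n1) (lq : n1.-tuple {mpoly k[n2]}) :
  'X_i \mPo lq = tnth lq i.
Proof. by rewrite comp_mpolyXU (tnth_nth 0). Qed.

Lemma mpolyXi_neq0 (k : fieldType) n (i : 'I_n) : ('X_i : {mpoly k[n]}) != 0.
Proof. by apply/eqP => H; move: (msizeX k U_(i)%MM); rewrite H msize0. Qed.

Section Construction.
Variable k : fieldType.
Variables m' h ad : nat.
Local Notation m := m'.+1.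
Local Notation N := (m.+1 + h.+1)%N.
Local Notation M := (m + h)%N.
Variable F : {mpoly k[N]}.
Hypothesis HF : bihomog 1 ad F.
Variable i0 : 'I_m.+1.

Lemma tuple_cat_eq (T : Type) (t1 t2 : N.-tuple T) :
  (forall i, tnth t1 (lshift h.+1 i) = tnth t2 (lshift h.+1 i)) ->
  (forall j, tnth t1 (rshift m.+1 j) = tnth t2 (rshift m.+1 j)) -> t1 = t2.
Proof.
move=> H1 H2; apply: eq_from_tnth => i; rewrite -(splitK i).
by case: (split i) => j /=; [exact: H1|exact: H2].
Qed.

Definition o0 : 'I_M := Ordinal (leq_trans (ltn0Sn m') (leq_addr h m)).
Definition tid (x : nat) : 'I_M := insubd o0 x.
Lemma tidE x : (x < M)%N -> val (tid x) = x.
Proof. by move=> hx; rewrite val_insubd hx. Qed.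

Definition phiy : h.+1.-tuple {mpoly k[M]} := [tuple 'X_(tid j) | j < h.+1].
Definition gt (j : 'I_m.+1) := F \mPo cat_tuple (ei k M j) phiy.
Definition uu (i : 'I_m.+1) : {mpoly k[M]} :=
  if i == i0 then 0 else 'X_(tid (h + unbump i0 i)).
Definition Ssum := \sum_(j < m.+1) uu j * gt j.
Definition phix : m.+1.-tuple {mpoly k[M]} :=
  [tuple gt i0 * uu i - (if i == i0 then Ssum else 0) | i < m.+1].

Local Notation R := {mpoly k[N]}.
Definition xv (i : 'I_m.+1) : R := 'X_(lshift h.+1 i).
Definition yv (j : 'I_h.+1) : R := 'X_(rshift m.+1 j).
Definition xvars : m.+1.-tuple R := [tuple xv i | i < m.+1].
Definition yvars : h.+1.-tuple R := [tuple yv j | j < h.+1].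
Definition g (j : 'I_m.+1) := F \mPo cat_tuple (ei k N j) yvars.
Definition jstar : 'I_m.+1 := lift i0 ord0.
Definition mu := xv jstar.
Definition yh := yv ord_max.
Definition idm (x : nat) : 'I_m := insubd ord0 x.
Definition idh (x : nat) : 'I_h.+1 := insubd ord0 x.
Definition psi : M.-tuple R :=
  [tuple (if (t < h)%N then mu * yv (idh t) else yh * xv (lift i0 (idm (t - h)))) | t < M].

Lemma tnth_psi t : tnth psi t =
  (if (t < h)%N then mu * yv (idh t) else yh * xv (lift i0 (idm (t - h)))).
Proof. by rewrite tnth_map tnth_ord_tuple. Qed.

Lemma V1 j : tnth phiy j \mPo psi = mu * yv j.
Proof.
rewrite tnth_map tnth_ord_tuple compX tnth_psi.
have hj : (j < M)%N by move: (ltn_ord j); lia.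
rewrite tidE //.
case: ltnP => hjh.
  by congr (_ * yv _); apply: val_inj; rewrite val_insubd ltn_ord.
have -> : j = ord_max by apply: val_inj => /=; move: (ltn_ord j) hjh; lia.
rewrite subnn mulrC /mu /yh /jstar; congr (xv (lift _ _) * _).
by apply: val_inj; rewrite val_insubd.
Qed.

Definition xp (i : 'I_m.+1) : R := if i == i0 then 0 else xv i.

Lemma V2 i : uu i \mPo psi = yh * xp i.
Proof.
rewrite /uu /xp; case: (unliftP i0 i) => [j ->|->]; last by rewrite eqxx comp_mpoly0 mulr0.
rewrite eq_sym (negbTE (neq_lift _ _)) compX tnth_psi /= bumpK.
have hj : (h + j < M)%N by rewrite addnC ltn_add2r.
rewrite tidE // ltnNge leq_addr /= addKn; congr (_ * xv (lift _ _)).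
by apply: val_inj; rewrite val_insubd ltn_ord.
Qed.

Definition sct1 (l : R) n (u : n.-tuple R) : n.-tuple R := [tuple l * tnth u i | i < n].

Lemma ei_comp n1 n2 j (L : n1.-tuple {mpoly k[n2]}) i :
  tnth (@ei k m n1 j) i \mPo L = tnth (@ei k m n2 j) i.
Proof. by rewrite !tnth_map !tnth_ord_tuple; case: (j == i); rewrite ?comp_mpoly1 ?comp_mpoly0. Qed.

Lemma V3 j : gt j \mPo psi = mu ^+ ad * g j.
Proof.
rewrite /gt comp_assoc.
have -> : [tuple tnth (cat_tuple (ei k M j) phiy) i \mPo psi | i < N] =
    cat_tuple (sct 1 (ei k N j)) (sct mu yvars).
  apply: tuple_cat_eq => [i|i]; rewrite tnth_map tnth_ord_tuple.
    by rewrite !tnth_lshift ei_comp [RHS]tnth_map tnth_ord_tuple mul1r.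
  by rewrite !tnth_rshift V1 [RHS]tnth_map tnth_ord_tuple /yvars tnth_map tnth_ord_tuple.
rewrite (comp_scale _ _ _ _ HF) expr1n mul1r; congr (_ * _); congr (F \mPo _).
Qed.


Definition Sx := \sum_(j < m.+1) xp j * g j.
Definition w (i : 'I_m.+1) := g i0 * xp i - (if i == i0 then Sx else 0).
Definition wt : m.+1.-tuple R := [tuple w i | i < m.+1].

Lemma V4 i : tnth phix i \mPo psi = mu ^+ ad * yh * w i.
Proof.
have HS : Ssum \mPo psi = mu ^+ ad * yh * Sx.
  rewrite /Ssum rmorph_sum /Sx mulr_sumr; apply: eq_bigr => j _.
  by rewrite rmorphM /= V2 V3; ring.
rewrite tnth_map tnth_ord_tuple rmorphB rmorphM /= V2 V3 /w.
case: (i == i0); last by rewrite comp_mpoly0 !subr0; ring.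
by rewrite HS; ring.
Qed.

Lemma V5 d e (G : R) : bihomog d e G ->
  (G \mPo cat_tuple phix phiy) \mPo psi = (mu ^+ ad * yh) ^+ d * mu ^+ e * (G \mPo cat_tuple wt yvars).
Proof.
move=> HG; rewrite comp_assoc.
have -> : [tuple tnth (cat_tuple phix phiy) i \mPo psi | i < N] =
    cat_tuple (sct (mu ^+ ad * yh) wt) (sct mu yvars).
  apply: tuple_cat_eq => [i|i]; rewrite tnth_map tnth_ord_tuple.
    by rewrite !tnth_lshift V4 [RHS]tnth_map tnth_ord_tuple /wt tnth_map tnth_ord_tuple.
  by rewrite !tnth_rshift V1 [RHS]tnth_map tnth_ord_tuple /yvars tnth_map tnth_ord_tuple.
by rewrite (comp_scale _ _ _ _ HG).
Qed.

Lemma xy_id : cat_tuple xvars yvars = [tuple 'X_i | i < N].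
Proof.
apply: tuple_cat_eq => [i|j]; rewrite [RHS]tnth_map tnth_ord_tuple.
  by rewrite tnth_lshift tnth_map tnth_ord_tuple.
by rewrite tnth_rshift tnth_map tnth_ord_tuple.
Qed.

Lemma V6 d e (G : R) : bihomog d e G ->
  G \mPo cat_tuple (sct (g i0) xvars) (sct 1 yvars) = g i0 ^+ d * G.
Proof.
by move=> HG; rewrite (comp_scale _ _ _ _ HG) xy_id comp_mpoly_id expr1n mulr1.
Qed.

Lemma FE : F = \sum_(j < m.+1) xv j * g j.
Proof.
rewrite -{1}(comp_mpoly_id F) -xy_id (comp_lin _ _ HF); apply: eq_bigr => j _.
by rewrite tnth_map tnth_ord_tuple.
Qed.

Lemma V7 i : cong F (tnth (cat_tuple (sct (g i0) xvars) (sct 1 yvars)) i) (tnth (cat_tuple wt yvars) i).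
Proof.
rewrite -(splitK i); case: (split i) => j /=.
  rewrite !tnth_lshift /wt !tnth_map !tnth_ord_tuple /w /xp.
  case: eqVneq => [->|ne]; last by rewrite subr0; apply: cong_refl.
  exists 1; rewrite mulr1 mulr0 sub0r opprK [RHS]FE (bigD1 i0) //= /Sx (bigD1 i0) //=.
  rewrite {1}/xp eqxx mul0r add0r mulrC; congr (_ + _); apply: eq_bigr => l hl.
  by rewrite /xp (negbTE hl).
rewrite !tnth_rshift !tnth_map !tnth_ord_tuple mul1r; exact: cong_refl.
Qed.

Lemma yh_neq0 : yh != 0. Proof. exact: mpolyXi_neq0. Qed.
Lemma mu_neq0 : mu != 0. Proof. exact: mpolyXi_neq0. Qed.

Lemma dominance d e (G : R) : bihomog d e G -> G \mPo cat_tuple phix phiy = 0 ->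
  cong F (g i0 ^+ d * G) 0.
Proof.
move=> HG H0.
have c0 : (mu ^+ ad * yh) ^+ d * mu ^+ e != 0.
  by rewrite !mulf_neq0 ?expf_neq0 ?mulf_neq0 ?expf_neq0 ?mu_neq0 ?yh_neq0.
have := V5 HG; rewrite H0 comp_mpoly0 => /esym /eqP.
rewrite mulf_eq0 (negbTE c0) /= => /eqP Hw.
have := comp_cong G V7; by rewrite (V6 HG) Hw.
Qed.

Lemma pullF : F \mPo cat_tuple phix phiy = 0.
Proof.
rewrite (comp_lin _ _ HF).
have E1 : \sum_i tnth phix i * gt i =
    \sum_i gt i0 * (uu i * gt i) - \sum_i (if i == i0 then Ssum else 0) * gt i.
  by rewrite -sumrB; apply: eq_bigr => i _; rewrite tnth_map tnth_ord_tuple mulrBl mulrA.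
rewrite E1 -mulr_sumr -/Ssum (bigD1 i0) //= eqxx big1 ?addr0; first by rewrite mulrC subrr.
by move=> i hi; rewrite (negbTE hi) mul0r.
Qed.


Lemma homX n (i : 'I_n) : ('X_i : {mpoly k[n]}) \is 1.-homog.
Proof. by rewrite dhomogX /= mdeg1. Qed.

Lemma hom_gt j : gt j \is ad.-homog.
Proof.
apply: (@comp_homog _ _ _ _ _ (fun i : 'I_N => nat_of_bool (m.+1 <= i)%N)).
  move=> i; rewrite -(splitK i); case: (split i) => l /=.
    rewrite tnth_lshift tnth_map tnth_ord_tuple /= leqNgt ltn_ord /=.
    by case: (j == l); [exact: dhomog1|exact: dhomog0].
  by rewrite tnth_rshift tnth_map tnth_ord_tuple /= leq_addr; exact: homX.
move=> mon Hmon; have [_ yd] : xdeg mon = 1%N /\ ydeg mon = ad by apply: HF. rewrite -yd /ydeg big_split_ord /=.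
rewrite big1 ?add0n; last by move=> i _; rewrite leqNgt ltn_ord.
by apply: eq_bigr => j' _; rewrite leq_addr mul1n.
Qed.

Lemma hom_uu i : uu i \is 1.-homog.
Proof. by rewrite /uu; case: (i == i0); [exact: dhomog0|exact: homX]. Qed.

Lemma hom_phix i : tnth phix i \is (ad.+1).-homog.
Proof.
rewrite tnth_map tnth_ord_tuple; apply: rpredB.
  by have := dhomogM (hom_gt i0) (hom_uu i); rewrite addn1.
case: (i == i0); last exact: rpred0.
apply: rpred_sum => j _; by have := dhomogM (hom_uu j) (hom_gt j); rewrite add1n.
Qed.

Lemma hom_phiy j : tnth phiy j \is 1.-homog.
Proof. by rewrite tnth_map tnth_ord_tuple; exact: homX. Qed.

Lemma phiy_nz : tnth phiy ord0 != 0.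
Proof. by rewrite tnth_map tnth_ord_tuple; exact: mpolyXi_neq0. Qed.

Hypothesis gi0 : g i0 != 0.

Lemma phix_nz : tnth phix jstar != 0.
Proof.
apply/eqP => H; move: (V4 jstar); rewrite H comp_mpoly0 /w /xp.
have -> : (jstar == i0) = false by rewrite eq_sym; apply/negbTE; exact: neq_lift.
rewrite subr0 => /esym /eqP; rewrite !mulf_eq0 expf_eq0 (negbTE mu_neq0) (negbTE yh_neq0).
by rewrite (negbTE gi0) andbF.
Qed.

Definition sigma : N.-tuple R := cat_tuple [tuple (0 : R) | _ < m.+1] yvars.

Lemma g_ndvd : ~ (exists q, g i0 = F * q).
Proof.
case=> q Hq.
have F0 : F \mPo sigma = 0.
  rewrite (comp_lin _ _ HF) big1 // => i _; by rewrite tnth_map mul0r.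
have gs : g i0 \mPo sigma = g i0.
  rewrite /g comp_assoc; congr (F \mPo _).
  apply: tuple_cat_eq => [i|j]; rewrite tnth_map tnth_ord_tuple.
    by rewrite !tnth_lshift ei_comp.
  by rewrite !tnth_rshift tnth_map tnth_ord_tuple /yv compX /sigma tnth_rshift tnth_map tnth_ord_tuple.
by move: gi0; rewrite -gs Hq rmorphM /= F0 mul0r eqxx.
Qed.

End Construction.


Lemma small_unit (k : fieldType) n (p : {mpoly k[n]}) : p != 0 -> (msize p <= 1)%N ->
  p \is a GRing.unit.
Proof.
move=> p0 hs; have E := msize1_polyC hs.
have c0 : p@_0 != 0 by apply: contraNneq p0 => h; rewrite E h.
by apply/unitrPr; exists ((p@_0)^-1)%:MP; rewrite {1}E -mpolyCM divff.
Qed.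

Lemma ndvd_pow (A : idomainType) (F gg : A) d : primeel F -> ~ dvd F gg -> ~ dvd F (gg ^+ d).
Proof.
move=> [F0 [Fu Fp]] ng; elim: d => [|d IH].
  rewrite expr0 => -[c Hc]; apply: (negP Fu); apply/unitrPr; by exists c.
by rewrite exprS => /Fp [].
Qed.

Theorem lemma3p19 (k : fieldType) (m h a : nat)
  (char0 : [pchar k]%R =i pred0) (hm : (1 <= m)%N)
  (F : {mpoly k[m.+1 + h.+1]}) (hD : @integral_divisor k m h a F) :
  @unirational_divisor k m h F.
Proof.
case: m hm F hD => [//|m'] _ F [HF [HFs HFi]].
have F0 : F != 0 by apply: contraTneq HFs => ->; rewrite msize0.
have [i0 gi0] : exists i0, g F i0 != 0.
  apply: NNPP => C; move/eqP: F0; apply; rewrite (FE HF) big1 // => j _.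
  case: (eqVneq (g F j) 0) => [->|nz]; first by rewrite mulr0.
  by exfalso; apply: C; exists j.
have irF : irred F.
  split=> //; split.
    apply/negP => Fu; case/andP: Fu => /eqP E Fu0.
    have c0 : F@_0 != 0 by apply: contraNneq F0 => h0; rewrite E h0.
    have : msize F == 1%N by apply/msize_poly1P; exists (F@_0).
    by move/eqP => h1; move: HFs; rewrite h1.
  move=> p q E.
  have p0 : p != 0 by apply: contraNneq F0 => hp; rewrite E hp mul0r.
  have q0 : q != 0 by apply: contraNneq F0 => hq; rewrite E hq mulr0.
  by case: (HFi p q E) => hs; [left|right]; apply: small_unit.
have pF : primeel F := (UFDl_mpoly k _).1 F irF.
exists (phix F i0), (phiy k m' h); split.
  exists a.+1, 1%N; split; first exact: (hom_phix HF).
  split; first by exists (jstar i0); exact: (phix_nz HF gi0).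
  split; first exact: hom_phiy.
  by exists ord0; exact: phiy_nz.
split; first exact: (pullF HF).
move=> d e G HG H0.
have [q Hq] := dominance HF HG H0.
rewrite subr0 in Hq.
have : dvd F (g F i0 ^+ d * G) by exists q.
move/(pF.2.2) => [|//].
by move=> Hd; exfalso; exact: (ndvd_pow pF (g_ndvd HF gi0) Hd).
Qed.
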